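(* Let $\tau,\alpha,b>0$ satisfy $\alpha b>\tau$, let $B>0$ satisfy $\frac1b<B<\frac\alpha\tau$, and let $0<\gamma_\star<\gamma^\star$. Then there exist $\delta_1>0$ and $k_1,k_2>0$, depending only on $\Omega,\tau,\alpha,b,B,\gamma_\star,\gamma^\star$, such that whenever $\delta\in(0,\delta_1]$, $D>0$, the data are as in the context, $\varepsilon\in(0,1)$ and $T\in(0,T_{max,\varepsilon})$ are such that $\gamma_\star\le\gamma_\varepsilon(\Theta_\varepsilon)\le\gamma^\star$ in $\Omega\times(0,T)$, then for all $t\in(0,T)$, $$k_1\Big(\int_\Omega w_{\varepsilon x}^2+\int_\Omega v_{\varepsilon xx}^2+\int_\Omega u_{\varepsilon xx}^2+\varepsilon\int_\Omega u_{\varepsilon xxx}^2\Big)\le y_\varepsilon^{(B,\delta)}(t)\le k_2\Big(\int_\Omega w_{\varepsilon x}^2+\int_\Omega v_{\varepsilon xx}^2+\int_\Omega u_{\varepsilon xx}^2+\varepsilon\int_\Omega u_{\varepsilon xxx}^2\Big).$$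
   Context: Let $\Omega\subset\mathbb R$ be a bounded open interval and $D,\tau,\alpha,b>0$. Let $(\gamma_\varepsilon)_{\varepsilon\in(0,1)}\subset C^\infty([0,\infty);[0,\infty))$ and let $(u_{0\varepsilon}),(v_{0\varepsilon}),(w_{0\varepsilon}),(\Theta_{0\varepsilon})_{\varepsilon\in(0,1)}\subset C^\infty(\overline\Omega)$ be such that for each $\varepsilon$ the derivatives $u_{0\varepsilon x},v_{0\varepsilon x},w_{0\varepsilon x},\Theta_{0\varepsilon x}$ are compactly supported in $\Omega$, $\int_\Omega u_{0\varepsilon}=\int_\Omega v_{0\varepsilon}=\int_\Omega w_{0\varepsilon}=0$, and $\Theta_{0\varepsilon}\ge0$. For $\varepsilon\in(0,1)$ consider the regularized problem $$\tau w_{\varepsilon t}=\varepsilon w_{\varepsilon xx}+b(\gamma_\varepsilon(\Theta_\varepsilon)v_{\varepsilon x})_x+(\gamma_\varepsilon(\Theta_\varepsilon)u_{\varepsilon x})_x-\alpha w_\varepsilon,\quad v_{\varepsilon t}=\varepsilon v_{\varepsilon xx}+w_\varepsilon,\quad u_{\varepsilon t}=\varepsilon u_{\varepsilon xx}+v_\varepsilon,\quad \Theta_{\varepsilon t}=D\Theta_{\varepsilon xx}+b\gamma_\varepsilon(\Theta_\varepsilon)v_{\varepsilon x}^2$$ in $\Omega\times(0,\infty)$, with $w_{\varepsilon x}=v_{\varepsilon x}=u_{\varepsilon x}=\Theta_{\varepsilon x}=0$ on $\partial\Omega$ and initial values $w_{0\varepsilon},v_{0\varepsilon},u_{0\varepsilon},\Theta_{0\varepsilon}$.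 It is known that for each $\varepsilon$ there exist $T_{max,\varepsilon}\in(0,\infty]$ and a classical solution $(w_\varepsilon,v_\varepsilon,u_\varepsilon,\Theta_\varepsilon)$, each component in $C^{2,1}(\overline\Omega\times[0,T_{max,\varepsilon}))\cap C^\infty(\overline\Omega\times(0,T_{max,\varepsilon}))$, with $\Theta_\varepsilon\ge0$, $\int_\Omega w_\varepsilon=\int_\Omega v_\varepsilon=\int_\Omega u_\varepsilon=0$ for all times, and such that if $T_{max,\varepsilon}<\infty$ then $\limsup_{t\nearrow T_{max,\varepsilon}}\{\|w_\varepsilon\|_{L^\infty}+\|v_\varepsilon\|_{W^{1,2}}+\|u_\varepsilon\|_{W^{1,2}}+\|\Theta_\varepsilon\|_{L^\infty}\}=\infty$. Subscripts $x,t$ denote partial derivatives; $\int_\Omega$ integrates in $x$ at time $t$. For $B>0,\delta>0$ define, for $t\in[0,T_{max,\varepsilon})$ (with $\gamma_\varepsilon=\gamma_\varepsilon(\Theta_\varepsilon)$), $$y_\varepsilon^{(B,\delta)}(t):=\frac\tau2\int_\Omega w_{\varepsilon x}^2+\frac b2\int_\Omega\gamma_\varepsilon v_{\varepsilon xx}^2+\frac{B+b\delta}{2}\int_\Omega\gamma_\varepsilon u_{\varepsilon xx}^2+\frac{\alpha B-\tau\delta}{2}\int_\Omega v_{\varepsilon x}^2+\int_\Omega\gamma_\varepsilon u_{\varepsilon xx}v_{\varepsilon xx}+\varepsilon\int_\Omega\gamma_\varepsilon u_{\varepsilon xxx}^2$$ $$+\frac{(1+\tau)B\varepsilon}{2}\int_\Omega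 v_{\varepsilon xx}^2+\tau B\int_\Omega v_{\varepsilon x}w_{\varepsilon x}+\tau\delta\int_\Omega u_{\varepsilon x}w_{\varepsilon x}+\alpha\delta\int_\Omega u_{\varepsilon x}v_{\varepsilon x}.$$ *)

(* Defs.v *)
From Stdlib Require Import Reals List.
From Coquelicot Require Import Coquelicot.
Open Scope R_scope.

(* Functions of (x,t) are modelled as f : R -> R -> R, f x t. *)

Definition dx (f : R -> R -> R) : R -> R -> R := fun x t => Derive (fun y => f y t) x.
Definition dt (f : R -> R -> R) : R -> R -> R := fun x t => Derive (fun s => f x s) t.

Fixpoint pd (l : list bool) (f : R -> R -> R) : R -> R -> R :=
  match l with
  | nil => f
  | true :: l' => dx (pd l' f)
  | false :: l' => dt (pd l' f)
  end.

Definition cont2 (g : R -> R -> R) (x t : R) : Prop :=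
  continuous (fun p : R * R => g (fst p) (snd p)) (x, t).

(* f is C^infty on a neighbourhood of each point of S (so up to the boundary of S) *)
Definition smooth2_near (S : R -> R -> Prop) (f : R -> R -> R) : Prop :=
  forall x t, S x t -> exists r, 0 < r /\
    forall y s, Rabs (y - x) < r -> Rabs (s - t) < r ->
      forall l : list bool,
        ex_derive (fun y' => pd l f y' s) y /\
        ex_derive (fun s' => pd l f y s') s /\
        cont2 (pd l f) y s.

Definition C21_near (S : R -> R -> Prop) (f : R -> R -> R) : Prop :=
  forall x t, S x t -> exists r, 0 < r /\
    forall y s, Rabs (y - x) < r -> Rabs (s - t) < r ->
      ex_derive (fun y' => f y' s) y /\
      ex_derive (fun y' => dx f y' s) y /\
      ex_derive (fun s' => f y s') s /\
      cont2 f y s /\ cont2 (dx f) y s /\ cont2 (dx (dx f)) y s /\ cont2 (dt f) y s.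

Definition smooth1_near (S : R -> Prop) (g : R -> R) : Prop :=
  forall x, S x -> exists r, 0 < r /\
    forall y, Rabs (y - x) < r -> forall n : nat, ex_derive_n g n y.

(* closed interval [a0,a1] = closure of Omega *)
Definition Icl (a0 a1 x : R) : Prop := a0 <= x <= a1.

Definition init_datum (a0 a1 : R) (f0 : R -> R) : Prop :=
  smooth1_near (Icl a0 a1) f0 /\
  exists c d, a0 < c /\ c <= d /\ d < a1 /\
    forall x, Icl a0 a1 x -> (x <= c \/ d <= x) -> Derive f0 x = 0.

Definition admissible_gamma (g : R -> R) : Prop :=
  smooth1_near (fun s => 0 <= s) g /\ forall s, 0 <= s -> 0 <= g s.

Definition L2sq (a0 a1 : R) (h : R -> R) : R := RInt (fun x => h x ^ 2) a0 a1.

Definition classical_solution (a0 a1 D tau alpha b eps : R) (g : R -> R)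
    (w0 v0 u0 Th0 : R -> R) (Tmax : Rbar) (w v u Th : R -> R -> R) : Prop :=
  Rbar_lt (Finite 0) Tmax /\
  (forall f, (f = w \/ f = v \/ f = u \/ f = Th) ->
     C21_near (fun x t => Icl a0 a1 x /\ 0 <= t /\ Rbar_lt (Finite t) Tmax) f /\
     smooth2_near (fun x t => Icl a0 a1 x /\ 0 < t /\ Rbar_lt (Finite t) Tmax) f) /\
  (forall x t, a0 < x < a1 -> 0 < t -> Rbar_lt (Finite t) Tmax ->
     tau * dt w x t = eps * dx (dx w) x t
                      + b * dx (fun y s => g (Th y s) * dx v y s) x t
                      + dx (fun y s => g (Th y s) * dx u y s) x t
                      - alpha * w x t /\
     dt v x t = eps * dx (dx v) x t + w x t /\
     dt u x t = eps * dx (dx u) x t + v x t /\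
     dt Th x t = D * dx (dx Th) x t + b * g (Th x t) * (dx v x t) ^ 2) /\
  (forall x t, (x = a0 \/ x = a1) -> 0 < t -> Rbar_lt (Finite t) Tmax ->
     dx w x t = 0 /\ dx v x t = 0 /\ dx u x t = 0 /\ dx Th x t = 0) /\
  (forall x, Icl a0 a1 x ->
     w x 0 = w0 x /\ v x 0 = v0 x /\ u x 0 = u0 x /\ Th x 0 = Th0 x) /\
  (forall x t, Icl a0 a1 x -> 0 <= t -> Rbar_lt (Finite t) Tmax -> 0 <= Th x t) /\
  (forall t, 0 <= t -> Rbar_lt (Finite t) Tmax ->
     RInt (fun x => w x t) a0 a1 = 0 /\ RInt (fun x => v x t) a0 a1 = 0 /\
     RInt (fun x => u x t) a0 a1 = 0) /\
  (* extensibility criterion: if Tmax < oo then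
     limsup_{t -> Tmax} (||w||_oo + ||v||_{W12} + ||u||_{W12} + ||Th||_oo) = oo *)
  (forall tm, Tmax = Finite tm ->
     forall M s, s < tm -> exists t x1 x2, s < t < tm /\ 0 <= t /\
       Icl a0 a1 x1 /\ Icl a0 a1 x2 /\
       Rabs (w x1 t)
       + sqrt (L2sq a0 a1 (fun x => v x t) + L2sq a0 a1 (fun x => dx v x t))
       + sqrt (L2sq a0 a1 (fun x => u x t) + L2sq a0 a1 (fun x => dx u x t))
       + Rabs (Th x2 t) > M).

Definition yfun (a0 a1 tau alpha b eps B delta : R) (g : R -> R)
    (w v u Th : R -> R -> R) (t : R) : R :=
  let G := fun x => g (Th x t) in
  let wx := fun x => dx w x t in
  let vx := fun x => dx v x t in
  let vxx := fun x => dx (dx v) x t in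
  let ux := fun x => dx u x t in
  let uxx := fun x => dx (dx u) x t in
  let uxxx := fun x => dx (dx (dx u)) x t in
  tau / 2 * RInt (fun x => wx x ^ 2) a0 a1
  + b / 2 * RInt (fun x => G x * vxx x ^ 2) a0 a1
  + (B + b * delta) / 2 * RInt (fun x => G x * uxx x ^ 2) a0 a1
  + (alpha * B - tau * delta) / 2 * RInt (fun x => vx x ^ 2) a0 a1
  + RInt (fun x => G x * uxx x * vxx x) a0 a1
  + eps * RInt (fun x => G x * uxxx x ^ 2) a0 a1
  + (1 + tau) * B * eps / 2 * RInt (fun x => vxx x ^ 2) a0 a1
  + tau * B * RInt (fun x => vx x * wx x) a0 a1
  + tau * delta * RInt (fun x => ux x * wx x) a0 a1
  + alpha * delta * RInt (fun x => ux x * vx x) a0 a1.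

Definition Efun (a0 a1 eps : R) (w v u : R -> R -> R) (t : R) : R :=
  RInt (fun x => dx w x t ^ 2) a0 a1
  + RInt (fun x => dx (dx v) x t ^ 2) a0 a1
  + RInt (fun x => dx (dx u) x t ^ 2) a0 a1
  + eps * RInt (fun x => dx (dx (dx u)) x t ^ 2) a0 a1.

(* Main.v *)
Require Import Defs.
From Stdlib Require Import Reals Lra Psatz List.
From Coquelicot Require Import Coquelicot.
Open Scope R_scope.

Lemma slice_cont (g : R -> R -> R) x t :
  continuous (fun p : R * R => g (fst p) (snd p)) (x, t) -> continuous (fun y => g y t) x.
Proof.
  intro H. apply (continuous_comp_2 (fun y => y) (fun _ => t) g x).
  apply continuous_id. apply continuous_const. exact H.
Qed.

Lemma cont_mul (f h : R -> R) x : continuous f x -> continuous h x ->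
  continuous (fun y => f y * h y) x.
Proof. intros. apply (continuous_mult f h x); auto. Qed.

Lemma cont_sq (f : R -> R) x : continuous f x -> continuous (fun y => f y ^ 2) x.
Proof.
  intros. apply continuous_ext with (fun y => f y * f y).
  intros; simpl; ring. now apply cont_mul.
Qed.

Lemma exRI (f : R -> R) a b : a <= b -> (forall x, a <= x <= b -> continuous f x) -> ex_RInt f a b.
Proof.
  intros Hab H. apply (ex_RInt_continuous (V:=R_CompleteNormedModule)). rewrite Rmin_left, Rmax_right by lra. exact H.
Qed.

Lemma RInt_lin3 (f g h : R -> R) a b c d e :
  ex_RInt f a b -> ex_RInt g a b -> ex_RInt h a b ->
  RInt (fun x => c * f x + d * g x + e * h x) a b = c * RInt f a b + d * RInt g a b + e * RInt h a b.
Proof.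
  intros Hf Hg Hh.
  assert (E1 := RInt_scal f a b c Hf). assert (E2 := RInt_scal g a b d Hg).
  assert (E3 := RInt_scal h a b e Hh).
  assert (X1 := ex_RInt_scal f a b c Hf). assert (X2 := ex_RInt_scal g a b d Hg).
  assert (X3 := ex_RInt_scal h a b e Hh).
  assert (E4 := RInt_plus _ _ a b X1 X2).
  assert (X4 := ex_RInt_plus _ _ a b X1 X2).
  assert (E5 := RInt_plus _ _ a b X4 X3).
  unfold scal, plus in *; simpl in *; unfold mult in *; simpl in *.
  rewrite E5, E4, E1, E2, E3. reflexivity.
Qed.

Lemma ex_RInt_lin3 (f g h : R -> R) a b c d e :
  ex_RInt f a b -> ex_RInt g a b -> ex_RInt h a b ->
  ex_RInt (fun x => c * f x + d * g x + e * h x) a b.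
Proof.
  intros Hf Hg Hh.
  assert (X1 := ex_RInt_scal f a b c Hf). assert (X2 := ex_RInt_scal g a b d Hg).
  assert (X3 := ex_RInt_scal h a b e Hh).
  assert (X4 := ex_RInt_plus _ _ a b X1 X2).
  exact (ex_RInt_plus _ _ a b X4 X3).
Qed.

Lemma int_comb3 (f g h : R -> R) a b c d e : a <= b ->
  ex_RInt f a b -> ex_RInt g a b -> ex_RInt h a b ->
  (forall x, a < x < b -> 0 <= c * f x + d * g x + e * h x) ->
  0 <= c * RInt f a b + d * RInt g a b + e * RInt h a b.
Proof.
  intros Hab Hf Hg Hh H. rewrite <- RInt_lin3 by auto.
  apply RInt_ge_0; auto. now apply ex_RInt_lin3.
Qed.

Lemma poincare (f f' : R -> R) a b : a < b ->
  (forall x, a <= x <= b -> is_derive f x (f' x)) ->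
  (forall x, a <= x <= b -> continuous f' x) -> f a = 0 ->
  RInt (fun x => f x ^ 2) a b <= 4 * (b - a) ^ 2 * RInt (fun x => f' x ^ 2) a b.
Proof.
  intros Hab Hd Hc Ha.
  set (L := b - a).
  assert (HL : 0 < L) by (unfold L; lra).
  set (c := 2 * L).
  assert (Hc0 : 0 < c) by (unfold c; lra).
  assert (Cf : forall x, a <= x <= b -> continuous f x).
  { intros x Hx. apply (ex_derive_continuous (K:=R_AbsRing) (V:=R_NormedModule)). exists (f' x). now apply Hd. }
  assert (XF : forall p q, a <= p <= q -> q <= b -> ex_RInt (fun x => f x ^ 2) p q).
  { intros p q Hp Hq. apply exRI; [lra|]. intros; apply cont_sq, Cf; lra. }
  assert (XF' : forall p q, a <= p <= q -> q <= b -> ex_RInt (fun x => f' x ^ 2) p q).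
  { intros p q Hp Hq. apply exRI; [lra|]. intros; apply cont_sq, Hc; lra. }
  set (Iff := RInt (fun x => f x ^ 2) a b).
  set (If' := RInt (fun x => f' x ^ 2) a b).
  set (h := fun y => / c * f y ^ 2 + c * f' y ^ 2 + 0 * f' y ^ 2).
  assert (Xh : forall p q, a <= p <= q -> q <= b -> ex_RInt h p q).
  { intros p q Hp Hq. unfold h. apply ex_RInt_lin3; auto. }
  assert (Hh0 : forall y, 0 <= h y).
  { intro y. unfold h.
    assert (0 <= / c * f y ^ 2) by (apply Rmult_le_pos; [left; apply Rinv_0_lt_compat; lra | apply pow2_ge_0]).
    nra. }
  assert (Kb : forall x, a <= x <= b -> f x ^ 2 <= / c * Iff + c * If').
  { intros x Hx.
    assert (Dsq : forall y, a <= y <= x -> is_derive (fun z => f z ^ 2) y (2 * f y * f' y)).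
    { intros y Hy. assert (D := is_derive_mult f f y _ _ (Hd y ltac:(lra)) (Hd y ltac:(lra))
        ltac:(intros; apply Rmult_comm)).
      eapply is_derive_ext in D. 2: { intro t. instantiate (1 := fun z => f z ^ 2). simpl. unfold mult; simpl. ring. }
      simpl in D. unfold plus, mult in D; simpl in D.
      replace (2 * f y * f' y) with (f' y * f y + f y * f' y) by ring. exact D. }
    assert (IR := is_RInt_derive (V:=R_CompleteNormedModule) (fun z => f z ^ 2) (fun y => 2 * f y * f' y) a x).
    rewrite Rmin_left, Rmax_right in IR by lra.
    specialize (IR Dsq).
    assert (IR' : is_RInt (fun y => 2 * f y * f' y) a x (minus (f x ^ 2) (f a ^ 2))).
    { apply IR. intros y Hy. apply cont_mul. apply cont_mul. apply continuous_const.
      apply Cf; lra. apply Hc; lra. }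
    assert (IR2 := is_RInt_unique (V:=R_CompleteNormedModule) _ _ _ _ IR'). rewrite Ha in IR2. unfold minus, plus, opp in IR2; simpl in IR2.
    assert (E1 : f x ^ 2 = RInt (fun y => 2 * f y * f' y) a x) by (rewrite IR2; ring).
    rewrite E1.
    apply Rle_trans with (RInt h a x).
    { destruct (Req_dec a x) as [->|Hax].
      - rewrite !RInt_point. unfold zero; simpl; lra.
      - apply RInt_le. lra. eexists. exact IR'.
        apply Xh; lra.
        intros y Hy. unfold h.
        assert (0 <= / c * (f y - c * f' y) ^ 2) by (apply Rmult_le_pos; [left; apply Rinv_0_lt_compat; lra | apply pow2_ge_0]).
        assert (E : / c * (f y - c * f' y) ^ 2 = / c * f y ^ 2 + c * f' y ^ 2 - 2 * f y * f' y) by (field; lra).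
        lra. }
    apply Rle_trans with (RInt h a b).
    { rewrite <- (RInt_Chasles h a x b) by (apply Xh; lra).
      unfold plus; simpl.
      assert (0 <= RInt h x b).
      { destruct (Req_dec x b) as [->|Hxb]. rewrite RInt_point; unfold zero; simpl; lra.
        apply RInt_ge_0. lra. apply Xh; lra. intros; apply Hh0. }
      lra. }
    unfold h. rewrite RInt_lin3 by (apply XF || apply XF'; lra).
    unfold Iff, If'. lra. }
  assert (Hint : Iff <= L * (/ c * Iff + c * If')).
  { unfold Iff at 1.
    apply Rle_trans with (RInt (fun _ => / c * Iff + c * If') a b).
    apply RInt_le. lra. apply XF; lra. apply ex_RInt_const.
    intros; apply Kb; lra.
    rewrite RInt_const. unfold scal; simpl; unfold mult; simpl. unfold L. lra. }
  assert (E : L * (/ c * Iff + c * If') = Iff / 2 + 2 * L ^ 2 * If') by (unfold c; field; lra).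
  fold L. fold Iff. fold If'. lra.
Qed.

Lemma mle a b x y : 0 <= a -> 0 <= x -> a <= b -> x <= y -> a * x <= b * y.
Proof. intros. apply Rmult_le_compat; auto. Qed.

Lemma arith (tau alpha b B gs gS P : R) :
  0 < tau -> 0 < alpha -> 0 < b -> 0 < B -> 1 / b < B -> B < alpha / tau ->
  0 < gs -> gs < gS -> 0 <= P ->
  exists delta1 k1 k2 : R, 0 < delta1 /\ 0 < k1 /\ 0 < k2 /\
  forall delta eps AW AV1 AV2 AU1 AU2 AU3 GV2 GU2 GU3 X1 X2 X3 X4 : R,
    0 < delta -> delta <= delta1 -> 0 < eps -> eps < 1 ->
    0 <= AW -> 0 <= AV1 -> 0 <= AV2 -> 0 <= AU1 -> 0 <= AU2 -> 0 <= AU3 ->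
    gs * AV2 <= GV2 <= gS * AV2 -> gs * AU2 <= GU2 <= gS * AU2 -> gs * AU3 <= GU3 <= gS * AU3 ->
    (forall s, 0 < s -> 0 <= s / 2 * GU2 + / (2 * s) * GV2 + X1 /\ 0 <= s / 2 * GU2 + / (2 * s) * GV2 - X1) ->
    (forall s, 0 < s -> 0 <= s / 2 * AV1 + / (2 * s) * AW + X2 /\ 0 <= s / 2 * AV1 + / (2 * s) * AW - X2) ->
    (0 <= 1 / 2 * AU1 + / 2 * AW + X3 /\ 0 <= 1 / 2 * AU1 + / 2 * AW - X3) ->
    (0 <= 1 / 2 * AU1 + / 2 * AV1 + X4 /\ 0 <= 1 / 2 * AU1 + / 2 * AV1 - X4) ->
    AV1 <= P * AV2 -> AU1 <= P * AU2 ->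
    let Y := tau / 2 * AW + b / 2 * GV2 + (B + b * delta) / 2 * GU2
      + (alpha * B - tau * delta) / 2 * AV1 + X1 + eps * GU3
      + (1 + tau) * B * eps / 2 * AV2 + tau * B * X2 + tau * delta * X3 + alpha * delta * X4 in
    let E := AW + AV2 + AU2 + eps * AU3 in
    k1 * E <= Y /\ Y <= k2 * E.
Proof.
  intros Ht Ha Hb HB H1 H2 Hgs HgS HP.
  set (s1 := (1 / b + B) / 2).
  set (s2 := (B + alpha / tau) / 2).
  assert (Hs1a : 1 / b < s1) by (unfold s1; lra).
  assert (Hs1b : s1 < B) by (unfold s1; lra).
  assert (Hs2a : B < s2) by (unfold s2; lra).
  assert (Hs2b : s2 < alpha / tau) by (unfold s2; lra).
  assert (Hs1 : 0 < s1) by (assert (0 < 1/b) by (apply Rdiv_lt_0_compat; lra); lra).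
  assert (Hs2 : 0 < s2) by lra.
  assert (Hi1 : / s1 < b).
  { assert (0 < 1 / b) by (apply Rdiv_lt_0_compat; lra).
    assert (Hq : / s1 < / (1 / b)) by (apply Rinv_lt_contravar; nra).
    replace (/ (1 / b)) with b in Hq by (field; lra). exact Hq. }
  assert (Hts2 : tau * s2 < alpha).
  { apply (Rmult_lt_compat_l tau) in Hs2b; [|lra]. unfold Rdiv in Hs2b.
    rewrite (Rmult_comm alpha), <- Rmult_assoc, Rinv_r, Rmult_1_l in Hs2b by lra. lra. }
  assert (HBs2 : B / s2 < 1).
  { apply (Rmult_lt_reg_r s2); [lra|]. unfold Rdiv. rewrite Rmult_assoc, Rinv_l by lra. lra. }
  set (cW := tau / 2 - tau * B * / (2 * s2)).
  assert (HcW : 0 < cW).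
  { unfold cW. assert (tau * B * / (2 * s2) = tau / 2 * (B / s2)) by (field; lra).
    rewrite H. assert (0 < tau / 2 * (1 - B / s2)) by (apply Rmult_lt_0_compat; lra). nra. }
  set (cV := alpha * B / 2 - tau * B * (s2 / 2)).
  assert (HcV : 0 < cV).
  { unfold cV. assert (alpha * B / 2 - tau * B * (s2 / 2) = B / 2 * (alpha - tau * s2)) by field.
    rewrite H. apply Rmult_lt_0_compat; lra. }
  set (cV2 := (b - / s1) / 2 * gs).
  assert (HcV2 : 0 < cV2) by (unfold cV2; apply Rmult_lt_0_compat; lra).
  set (cU := (B - s1) / 2 * gs).
  assert (HcU : 0 < cU) by (unfold cU; apply Rmult_lt_0_compat; lra).
  set (K := tau + alpha).
  assert (HK : 0 < K) by (unfold K; lra).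
  set (delta1 := Rmin (cW / (2 * K)) (Rmin (cV / K) (cU / (2 * K * (P + 1))))).
  assert (Hd1 : 0 < delta1).
  { unfold delta1. repeat apply Rmin_pos; apply Rdiv_lt_0_compat; nra. }
  assert (Hd1W : delta1 * K <= cW / 2).
  { assert (delta1 <= cW / (2 * K)) by (unfold delta1; apply Rmin_l).
    apply (Rmult_le_compat_r K) in H; [|lra]. replace (cW / (2 * K) * K) with (cW / 2) in H by (field; lra). lra. }
  assert (Hd1V : delta1 * K <= cV).
  { assert (delta1 <= cV / K) by (unfold delta1; eapply Rle_trans; [apply Rmin_r|apply Rmin_l]).
    apply (Rmult_le_compat_r K) in H; [|lra]. replace (cV / K * K) with cV in H by (field; lra). lra. }
  assert (Hd1U : delta1 * K * P <= cU / 2).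
  { assert (delta1 <= cU / (2 * K * (P + 1))) by (unfold delta1; eapply Rle_trans; [apply Rmin_r|apply Rmin_r]).
    apply (Rmult_le_compat_r (K * (P + 1))) in H; [|nra].
    replace (cU / (2 * K * (P + 1)) * (K * (P + 1))) with (cU / 2) in H by (field; lra). nra. }
  set (k1 := Rmin (Rmin (cW / 2) cV2) (Rmin (cU / 2) gs)).
  assert (Hk1 : 0 < k1) by (unfold k1; repeat apply Rmin_pos; lra).
  set (k2 := tau / 2 + b / 2 * gS + (B + b * delta1) / 2 * gS + alpha * B / 2 * P + gS + gS
     + (1 + tau) * B / 2 + tau * B * (P + 1) / 2 + tau * delta1 * (P + 1) / 2 + alpha * delta1 * P).
  assert (Hk2 : 0 < k2).
  { unfold k2. assert (0 <= alpha * B / 2 * P) by (apply Rmult_le_pos; nra).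
    assert (0 <= tau * B * (P + 1) / 2) by (apply Rmult_le_pos; [|lra]; apply Rmult_le_pos; nra).
    assert (0 <= tau * delta1 * (P + 1) / 2) by (apply Rmult_le_pos; [|lra]; apply Rmult_le_pos; nra).
    assert (0 <= alpha * delta1 * P) by (apply Rmult_le_pos; nra).
    assert (0 <= (B + b * delta1) / 2 * gS) by (apply Rmult_le_pos; nra).
    assert (0 <= b / 2 * gS) by (apply Rmult_le_pos; nra).
    assert (0 <= (1 + tau) * B / 2) by (apply Rmult_le_pos; nra). lra. }
  exists delta1, k1, k2. split; [exact Hd1|]. split; [exact Hk1|]. split; [exact Hk2|].
  intros delta eps AW AV1 AV2 AU1 AU2 AU3 GV2 GU2 GU3 X1 X2 X3 X4 Hd Hdd He He1
    HAW HAV1 HAV2 HAU1 HAU2 HAU3 [GV2a GV2b] [GU2a GU2b] [GU3a GU3b] Y1 Y2 [Y3a Y3b] [Y4a Y4b] PV PU Y E.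
  destruct (Y1 s1 Hs1) as [Y1a _]. destruct (Y1 1 ltac:(lra)) as [_ Y1b].
  destruct (Y2 s2 Hs2) as [Y2a _]. destruct (Y2 1 ltac:(lra)) as [_ Y2b].
  clear Y1 Y2.
  assert (HE : 0 <= eps * AU3) by nra.
  split.
  -
    assert (L1 : 0 <= b * delta / 2 * GU2) by (apply Rmult_le_pos; nra).
    assert (L2 : 0 <= (1 + tau) * B * eps / 2 * AV2) by (apply Rmult_le_pos; [|lra]; unfold Rdiv; apply Rmult_le_pos; [|lra]; apply Rmult_le_pos; [|lra]; apply Rmult_le_pos; lra).
    assert (L3 : eps * gs * AU3 <= eps * GU3) by nra.
    assert (L4 : 0 <= tau * B * (s2 / 2 * AV1 + / (2 * s2) * AW + X2)) by (apply Rmult_le_pos; nra).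
    assert (L5 : 0 <= tau * delta * (1 / 2 * AU1 + / 2 * AW + X3)) by (apply Rmult_le_pos; nra).
    assert (L6 : 0 <= alpha * delta * (1 / 2 * AU1 + / 2 * AV1 + X4)) by (apply Rmult_le_pos; nra).
    assert (L7 : (b - / s1) / 2 * gs * AV2 <= (b - / s1) / 2 * GV2).
    { rewrite Rmult_assoc. apply Rmult_le_compat_l; lra. }
    assert (L8 : (B - s1) / 2 * gs * AU2 <= (B - s1) / 2 * GU2).
    { rewrite Rmult_assoc. apply Rmult_le_compat_l; lra. }
    assert (L9 : delta * K * AW <= cW / 2 * AW).
    { apply Rmult_le_compat_r; [lra|]. apply Rle_trans with (delta1 * K); [|lra]. apply Rmult_le_compat_r; lra. }
    assert (L10 : delta * K * AV1 <= cV * AV1).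
    { apply Rmult_le_compat_r; [lra|]. apply Rle_trans with (delta1 * K); [|lra]. apply Rmult_le_compat_r; lra. }
    assert (L11 : delta * K * AU1 <= cU / 2 * AU2).
    { apply Rle_trans with (delta * K * (P * AU2)). apply Rmult_le_compat_l; nra.
      rewrite <- Rmult_assoc. apply Rmult_le_compat_r; [lra|].
      apply Rle_trans with (delta1 * K * P); [|lra]. apply Rmult_le_compat_r; [lra|]. apply Rmult_le_compat_r; lra. }
    assert (Hlow : cW / 2 * AW + cV2 * AV2 + cU / 2 * AU2 + gs * (eps * AU3) <= Y).
    { assert (0 <= delta * tau * AW) by (apply Rmult_le_pos; nra).
      assert (0 <= delta * alpha * AW) by (apply Rmult_le_pos; nra).
      assert (0 <= delta * tau * AV1) by (apply Rmult_le_pos; nra).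
      assert (0 <= delta * alpha * AV1) by (apply Rmult_le_pos; nra).
      assert (0 <= delta * tau * AU1) by (apply Rmult_le_pos; nra).
      assert (0 <= delta * alpha * AU1) by (apply Rmult_le_pos; nra).
      unfold Y, cW, cV, cV2, cU, K in *. 
      assert (X : / (2 * s1) = / s1 / 2) by (field; lra). rewrite X in Y1a. 
      assert (X' : gs * (eps * AU3) = eps * gs * AU3) by ring. rewrite X'. lra. }
    apply Rle_trans with (cW / 2 * AW + cV2 * AV2 + cU / 2 * AU2 + gs * (eps * AU3)); [|exact Hlow].
    unfold E. 
    assert (k1 <= cW / 2) by (unfold k1; eapply Rle_trans; [apply Rmin_l|apply Rmin_l]).
    assert (k1 <= cV2) by (unfold k1; eapply Rle_trans; [apply Rmin_l|apply Rmin_r]).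
    assert (k1 <= cU / 2) by (unfold k1; eapply Rle_trans; [apply Rmin_r|apply Rmin_l]).
    assert (k1 <= gs) by (unfold k1; eapply Rle_trans; [apply Rmin_r|apply Rmin_r]).
    assert (k1 * AW <= cW / 2 * AW) by (apply Rmult_le_compat_r; lra).
    assert (k1 * AV2 <= cV2 * AV2) by (apply Rmult_le_compat_r; lra).
    assert (k1 * AU2 <= cU / 2 * AU2) by (apply Rmult_le_compat_r; lra).
    assert (k1 * (eps * AU3) <= gs * (eps * AU3)) by (apply Rmult_le_compat_r; lra).
    lra.
  -
    assert (EW : AW <= E) by (unfold E; lra).
    assert (EV : AV2 <= E) by (unfold E; lra).
    assert (EU : AU2 <= E) by (unfold E; lra).
    assert (EU3 : eps * AU3 <= E) by (unfold E; lra).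
    assert (HE0 : 0 <= E) by lra.
    assert (U1 : tau / 2 * AW <= tau / 2 * E) by (apply Rmult_le_compat_l; lra).
    assert (U2 : b / 2 * GV2 <= b / 2 * gS * E).
    { rewrite Rmult_assoc. apply Rmult_le_compat_l; [lra|]. apply Rle_trans with (gS * AV2); [lra|].
      apply Rmult_le_compat_l; lra. }
    assert (U3 : (B + b * delta) / 2 * GU2 <= (B + b * delta1) / 2 * gS * E).
    { rewrite Rmult_assoc. assert (gS*AU2 <= gS*E) by (apply Rmult_le_compat_l; lra). apply mle; nra. }
    assert (U4 : (alpha * B - tau * delta) / 2 * AV1 <= alpha * B / 2 * P * E).
    { apply Rle_trans with (alpha * B / 2 * AV1). apply Rmult_le_compat_r; nra.
      rewrite Rmult_assoc. apply Rmult_le_compat_l; [nra|]. apply Rle_trans with (P * AV2); [lra|].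
      apply Rmult_le_compat_l; lra. }
    assert (U5 : X1 <= gS * E).
    { assert (/ (2 * 1) = / 2) by (field). rewrite H in Y1b.
      assert (gS * AU2 <= gS * E) by (apply Rmult_le_compat_l; lra).
      assert (gS * AV2 <= gS * E) by (apply Rmult_le_compat_l; lra). lra. }
    assert (U6 : eps * GU3 <= gS * E).
    { apply Rle_trans with (gS * (eps * AU3)). nra. apply Rmult_le_compat_l; lra. }
    assert (U7 : (1 + tau) * B * eps / 2 * AV2 <= (1 + tau) * B / 2 * E).
    { apply mle; try lra. apply Rmult_le_pos; [|lra]. apply Rmult_le_pos; nra.
      assert (0 < (1 + tau) * B) by nra. 
      unfold Rdiv. rewrite (Rmult_assoc _ eps). apply Rmult_le_compat_l; lra. }
    assert (U8 : tau * B * X2 <= tau * B * (P + 1) / 2 * E).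
    { assert (/ (2 * 1) = / 2) by (field). rewrite H in Y2b.
      apply Rle_trans with (tau * B * ((AV1 + AW) / 2)). apply Rmult_le_compat_l; nra.
      unfold Rdiv. rewrite !Rmult_assoc. apply Rmult_le_compat_l; [lra|]. apply Rmult_le_compat_l; [lra|].
      assert (P * AV2 <= P * E) by (apply Rmult_le_compat_l; lra). nra. }
    assert (U9 : tau * delta * X3 <= tau * delta1 * (P + 1) / 2 * E).
    { apply Rle_trans with (tau * delta * ((AU1 + AW) / 2)). apply Rmult_le_compat_l; nra.
      unfold Rdiv. rewrite !Rmult_assoc. apply Rmult_le_compat_l; [lra|].
      assert (P * AU2 <= P * E) by (apply Rmult_le_compat_l; lra).
      apply mle; nra. }
    assert (U10 : alpha * delta * X4 <= alpha * delta1 * P * E).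
    { apply Rle_trans with (alpha * delta * ((AU1 + AV1) / 2)). apply Rmult_le_compat_l; nra.
      rewrite !Rmult_assoc. apply Rmult_le_compat_l; [lra|].
      assert (P * AU2 <= P * E) by (apply Rmult_le_compat_l; lra).
      assert (P * AV2 <= P * E) by (apply Rmult_le_compat_l; lra). apply mle; nra. }
    unfold Y, k2. lra.
Qed.

Lemma cont_pd (S : R -> R -> Prop) f l x t : smooth2_near S f -> S x t ->
  continuous (fun y => pd l f y t) x.
Proof.
  intros H HS. destruct (H x t HS) as [r [Hr H']].
  destruct (H' x t ltac:(rewrite Rminus_diag, Rabs_R0; lra) ltac:(rewrite Rminus_diag, Rabs_R0; lra) l) as [_ [_ C]].
  now apply slice_cont.
Qed.

Lemma der_pd (S : R -> R -> Prop) f l x t : smooth2_near S f -> S x t ->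
  is_derive (fun y => pd l f y t) x (pd (true :: l) f x t).
Proof.
  intros H HS. destruct (H x t HS) as [r [Hr H']].
  destruct (H' x t ltac:(rewrite Rminus_diag, Rabs_R0; lra) ltac:(rewrite Rminus_diag, Rabs_R0; lra) l) as [D _].
  apply Derive_correct in D. exact D.
Qed.

Lemma young_w G p q s : 0 <= G -> 0 < s ->
  0 <= s / 2 * (G * p ^ 2) + / (2 * s) * (G * q ^ 2) + 1 * (G * p * q) /\
  0 <= s / 2 * (G * p ^ 2) + / (2 * s) * (G * q ^ 2) + (-1) * (G * p * q).
Proof.
  intros HG Hs.
  assert (E1 : s / 2 * (G * p ^ 2) + / (2 * s) * (G * q ^ 2) + 1 * (G * p * q) = G * (/ (2 * s) * (s * p + q) ^ 2)) by (field; lra).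
  assert (E2 : s / 2 * (G * p ^ 2) + / (2 * s) * (G * q ^ 2) + (-1) * (G * p * q) = G * (/ (2 * s) * (s * p - q) ^ 2)) by (field; lra).
  assert (0 < / (2 * s)) by (apply Rinv_0_lt_compat; lra).
  rewrite E1, E2. split; apply Rmult_le_pos; auto; apply Rmult_le_pos; try lra; apply pow2_ge_0.
Qed.

Lemma young_u p q s : 0 < s ->
  0 <= s / 2 * p ^ 2 + / (2 * s) * q ^ 2 + 1 * (p * q) /\
  0 <= s / 2 * p ^ 2 + / (2 * s) * q ^ 2 + (-1) * (p * q).
Proof.
  intros Hs. destruct (young_w 1 p q s ltac:(lra) Hs) as [A B].
  split; [replace (s / 2 * p ^ 2 + / (2 * s) * q ^ 2 + 1 * (p * q)) with (s / 2 * (1 * p ^ 2) + / (2 * s) * (1 * q ^ 2) + 1 * (1 * p * q)) by ring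
  | replace (s / 2 * p ^ 2 + / (2 * s) * q ^ 2 + (-1) * (p * q)) with (s / 2 * (1 * p ^ 2) + / (2 * s) * (1 * q ^ 2) + (-1) * (1 * p * q)) by ring]; auto.
Qed.

Theorem lemma4p2 :
  forall (a0 a1 tau alpha b B gs gS : R),
    a0 < a1 -> 0 < tau -> 0 < alpha -> 0 < b -> alpha * b > tau ->
    0 < B -> 1 / b < B -> B < alpha / tau ->
    0 < gs -> gs < gS ->
    exists delta1 k1 k2 : R, 0 < delta1 /\ 0 < k1 /\ 0 < k2 /\
      forall (delta D eps : R) (g : R -> R) (w0 v0 u0 Th0 : R -> R)
             (Tmax : Rbar) (w v u Th : R -> R -> R) (T : R),
        0 < delta -> delta <= delta1 -> 0 < D ->
        admissible_gamma g ->
        init_datum a0 a1 w0 -> init_datum a0 a1 v0 ->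
        init_datum a0 a1 u0 -> init_datum a0 a1 Th0 ->
        RInt u0 a0 a1 = 0 -> RInt v0 a0 a1 = 0 -> RInt w0 a0 a1 = 0 ->
        (forall x, Icl a0 a1 x -> 0 <= Th0 x) ->
        0 < eps -> eps < 1 ->
        classical_solution a0 a1 D tau alpha b eps g w0 v0 u0 Th0 Tmax w v u Th ->
        0 < T -> Rbar_lt (Finite T) Tmax ->
        (forall x t, a0 < x < a1 -> 0 < t < T -> gs <= g (Th x t) <= gS) ->
        forall t, 0 < t < T ->
          k1 * Efun a0 a1 eps w v u t <= yfun a0 a1 tau alpha b eps B delta g w v u Th t /\
          yfun a0 a1 tau alpha b eps B delta g w v u Th t <= k2 * Efun a0 a1 eps w v u t.
Proof.
  intros a0 a1 tau alpha b B gs gS Ha Ht Hal Hb Hab HB HB1 HB2 Hgs HgS.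
  assert (HP : 0 <= 4 * (a1 - a0) ^ 2) by (apply Rmult_le_pos; [lra| apply pow2_ge_0]).
  destruct (arith tau alpha b B gs gS (4 * (a1 - a0) ^ 2) Ht Hal Hb HB HB1 HB2 Hgs HgS HP)
    as [d1 [k1 [k2 [Hd1 [Hk1 [Hk2 Hk]]]]]].
  exists d1, k1, k2. split; [exact Hd1|]. split; [exact Hk1|]. split; [exact Hk2|].
  intros delta D eps g w0 v0 u0 Th0 Tmax w v u Th T Hd Hdd HD Hg _ _ _ _ _ _ _ _ He He1 Hsol HT HTm Hgb t Htt.
  destruct Hsol as [_ [Hreg [_ [Hbc [_ [Hnn _]]]]]].
  assert (HtT : Rbar_lt (Finite t) Tmax) by (apply Rbar_lt_trans with (Finite T); [simpl; lra | exact HTm]).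
  set (S := fun x s => Icl a0 a1 x /\ 0 < s /\ Rbar_lt (Finite s) Tmax).
  assert (HS : forall x, a0 <= x <= a1 -> S x t) by (intros; unfold S, Icl; repeat split; auto; lra).
  assert (Sw : smooth2_near S w) by (apply (Hreg w); auto).
  assert (Sv : smooth2_near S v) by (apply (Hreg v); auto).
  assert (Su : smooth2_near S u) by (apply (Hreg u); auto).
  assert (STh : smooth2_near S Th) by (apply (Hreg Th); auto).
  set (W := fun x => dx w x t). set (V1 := fun x => dx v x t). set (V2 := fun x => dx (dx v) x t).
  set (U1 := fun x => dx u x t). set (U2 := fun x => dx (dx u) x t). set (U3 := fun x => dx (dx (dx u)) x t).
  set (G := fun x => g (Th x t)).
  assert (CW : forall x, a0 <= x <= a1 -> continuous W x) by (intros; exact (cont_pd S w (true :: nil) x t Sw (HS x H))).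
  assert (CV1 : forall x, a0 <= x <= a1 -> continuous V1 x) by (intros; exact (cont_pd S v (true :: nil) x t Sv (HS x H))).
  assert (CV2 : forall x, a0 <= x <= a1 -> continuous V2 x) by (intros; exact (cont_pd S v (true :: true :: nil) x t Sv (HS x H))).
  assert (CU1 : forall x, a0 <= x <= a1 -> continuous U1 x) by (intros; exact (cont_pd S u (true :: nil) x t Su (HS x H))).
  assert (CU2 : forall x, a0 <= x <= a1 -> continuous U2 x) by (intros; exact (cont_pd S u (true :: true :: nil) x t Su (HS x H))).
  assert (CU3 : forall x, a0 <= x <= a1 -> continuous U3 x) by (intros; exact (cont_pd S u (true :: true :: true :: nil) x t Su (HS x H))).
  assert (CG : forall x, a0 <= x <= a1 -> continuous G x).
  { intros x Hx. unfold G.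
    apply (continuous_comp (fun y => Th y t) g x).
    exact (cont_pd S Th nil x t STh (HS x Hx)).
    destruct Hg as [Hg1 _].
    assert (H0 : 0 <= Th x t) by (apply Hnn; unfold Icl; auto; lra).
    destruct (Hg1 _ H0) as [r [Hr Hr']].
    assert (E := Hr' (Th x t) ltac:(rewrite Rminus_diag, Rabs_R0; lra) 1%nat).
    simpl in E.
    apply (ex_derive_continuous (K:=R_AbsRing) (V:=R_NormedModule)). exact E. }
  assert (DV : forall x, a0 <= x <= a1 -> is_derive V1 x (V2 x)) by (intros; exact (der_pd S v (true :: nil) x t Sv (HS x H))).
  assert (DU : forall x, a0 <= x <= a1 -> is_derive U1 x (U2 x)) by (intros; exact (der_pd S u (true :: nil) x t Su (HS x H))).
  assert (BV : V1 a0 = 0) by (unfold V1; apply (Hbc a0 t); auto; lra).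
  assert (BU : U1 a0 = 0) by (unfold U1; apply (Hbc a0 t); auto; lra).
  assert (GB : forall x, a0 < x < a1 -> gs <= G x <= gS) by (intros; apply Hgb; auto; lra).
  assert (XI : forall f, (forall x, a0 <= x <= a1 -> continuous f x) -> ex_RInt f a0 a1) by (intros; apply exRI; auto; lra).
  assert (XI2 : forall f, (forall x, a0 <= x <= a1 -> continuous f x) -> ex_RInt (fun x => f x ^ 2) a0 a1)
    by (intros; apply XI; intros; apply cont_sq; auto).
  assert (XIm : forall f h, (forall x, a0 <= x <= a1 -> continuous f x) -> (forall x, a0 <= x <= a1 -> continuous h x) -> ex_RInt (fun x => f x * h x) a0 a1)
    by (intros; apply XI; intros; apply cont_mul; auto).
  assert (XIG2 : forall f, (forall x, a0 <= x <= a1 -> continuous f x) -> ex_RInt (fun x => G x * f x ^ 2) a0 a1)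
    by (intros; apply XI; intros; apply cont_mul; auto; apply cont_sq; auto).
  assert (XIG3 : ex_RInt (fun x => G x * U2 x * V2 x) a0 a1)
    by (apply XI; intros; apply cont_mul; auto; apply cont_mul; auto).
  assert (NN : forall f, (forall x, a0 <= x <= a1 -> continuous f x) -> 0 <= RInt (fun x => f x ^ 2) a0 a1).
  { intros f Hf. apply RInt_ge_0. lra. apply XI2; auto. intros; apply pow2_ge_0. }
  assert (GC : forall f, (forall x, a0 <= x <= a1 -> continuous f x) ->
     gs * RInt (fun x => f x ^ 2) a0 a1 <= RInt (fun x => G x * f x ^ 2) a0 a1 <= gS * RInt (fun x => f x ^ 2) a0 a1).
  { intros f Hf. split.
    - assert (Hc := int_comb3 (fun x => G x * f x ^ 2) (fun x => f x ^ 2) (fun x => f x ^ 2) a0 a1 1 (- gs) 0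
        ltac:(lra) (XIG2 f Hf) (XI2 f Hf) (XI2 f Hf)).
      assert (0 <= 1 * RInt (fun x => G x * f x ^ 2) a0 a1 + - gs * RInt (fun x => f x ^ 2) a0 a1 + 0 * RInt (fun x => f x ^ 2) a0 a1).
      { apply Hc. intros x Hx. destruct (GB x Hx). assert (0 <= f x ^ 2) by apply pow2_ge_0. nra. }
      lra.
    - assert (Hc := int_comb3 (fun x => G x * f x ^ 2) (fun x => f x ^ 2) (fun x => f x ^ 2) a0 a1 (-1) gS 0
        ltac:(lra) (XIG2 f Hf) (XI2 f Hf) (XI2 f Hf)).
      assert (0 <= -1 * RInt (fun x => G x * f x ^ 2) a0 a1 + gS * RInt (fun x => f x ^ 2) a0 a1 + 0 * RInt (fun x => f x ^ 2) a0 a1).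
      { apply Hc. intros x Hx. destruct (GB x Hx). assert (0 <= f x ^ 2) by apply pow2_ge_0. nra. }
      lra. }
  assert (YU : forall f h, (forall x, a0 <= x <= a1 -> continuous f x) -> (forall x, a0 <= x <= a1 -> continuous h x) ->
     forall s, 0 < s -> 0 <= s / 2 * RInt (fun x => f x ^ 2) a0 a1 + / (2 * s) * RInt (fun x => h x ^ 2) a0 a1 + RInt (fun x => f x * h x) a0 a1
       /\ 0 <= s / 2 * RInt (fun x => f x ^ 2) a0 a1 + / (2 * s) * RInt (fun x => h x ^ 2) a0 a1 - RInt (fun x => f x * h x) a0 a1).
  { intros f h Hf Hh s Hs. split.
    - assert (Hc := int_comb3 _ _ _ a0 a1 (s / 2) (/ (2 * s)) 1 ltac:(lra) (XI2 f Hf) (XI2 h Hh) (XIm f h Hf Hh)).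
      assert (X := Hc (fun x _ => proj1 (young_u (f x) (h x) s Hs))). lra.
    - assert (Hc := int_comb3 _ _ _ a0 a1 (s / 2) (/ (2 * s)) (-1) ltac:(lra) (XI2 f Hf) (XI2 h Hh) (XIm f h Hf Hh)).
      assert (X := Hc (fun x _ => proj2 (young_u (f x) (h x) s Hs))). lra. }
  assert (YW : forall s, 0 < s -> 0 <= s / 2 * RInt (fun x => G x * U2 x ^ 2) a0 a1 + / (2 * s) * RInt (fun x => G x * V2 x ^ 2) a0 a1 + RInt (fun x => G x * U2 x * V2 x) a0 a1
       /\ 0 <= s / 2 * RInt (fun x => G x * U2 x ^ 2) a0 a1 + / (2 * s) * RInt (fun x => G x * V2 x ^ 2) a0 a1 - RInt (fun x => G x * U2 x * V2 x) a0 a1).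
  { intros s Hs. split.
    - assert (Hc := int_comb3 _ _ _ a0 a1 (s / 2) (/ (2 * s)) 1 ltac:(lra) (XIG2 U2 CU2) (XIG2 V2 CV2) XIG3).
      assert (X := Hc (fun x Hx => proj1 (young_w (G x) (U2 x) (V2 x) s ltac:(destruct (GB x Hx); lra) Hs))). lra.
    - assert (Hc := int_comb3 _ _ _ a0 a1 (s / 2) (/ (2 * s)) (-1) ltac:(lra) (XIG2 U2 CU2) (XIG2 V2 CV2) XIG3).
      assert (X := Hc (fun x Hx => proj2 (young_w (G x) (U2 x) (V2 x) s ltac:(destruct (GB x Hx); lra) Hs))). lra. }
  assert (PV := poincare V1 V2 a0 a1 Ha DV CV2 BV).
  assert (PU := poincare U1 U2 a0 a1 Ha DU CU2 BU).
  destruct (YU U1 W CU1 CW 1 ltac:(lra)) as [Y3a Y3b].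
  destruct (YU U1 V1 CU1 CV1 1 ltac:(lra)) as [Y4a Y4b].
  assert (R := Hk delta eps
    (RInt (fun x => W x ^ 2) a0 a1) (RInt (fun x => V1 x ^ 2) a0 a1) (RInt (fun x => V2 x ^ 2) a0 a1)
    (RInt (fun x => U1 x ^ 2) a0 a1) (RInt (fun x => U2 x ^ 2) a0 a1) (RInt (fun x => U3 x ^ 2) a0 a1)
    (RInt (fun x => G x * V2 x ^ 2) a0 a1) (RInt (fun x => G x * U2 x ^ 2) a0 a1) (RInt (fun x => G x * U3 x ^ 2) a0 a1)
    (RInt (fun x => G x * U2 x * V2 x) a0 a1) (RInt (fun x => V1 x * W x) a0 a1)
    (RInt (fun x => U1 x * W x) a0 a1) (RInt (fun x => U1 x * V1 x) a0 a1)
    Hd Hdd He He1 (NN W CW) (NN V1 CV1) (NN V2 CV2) (NN U1 CU1) (NN U2 CU2) (NN U3 CU3)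
    (GC V2 CV2) (GC U2 CU2) (GC U3 CU3) YW (YU V1 W CV1 CW)
    ltac:(split; lra) ltac:(split; lra) PV PU).
  exact R.
Qed.
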